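(* Let $n\ge1$ and let $A_{ij}$ denote the coefficient of $u^iv^jw^{n-i-j}$ in $P_{1/n}(u,v,w)$, with $A_{ij}=0$ for pairs $(i,j)\in\mathbb{Z}^2$ not corresponding to a monomial of $P_{1/n}$. Then for all integers $i,j$: $$A_{ij}^2\ge A_{i-1,j}A_{i+1,j},\qquad A_{ij}^2\ge A_{i,j-1}A_{i,j+1},\qquad A_{ij}^2\ge A_{i-1,j+1}A_{i+1,j-1}.$$ That is, the coefficients are log-concave along every horizontal, vertical and anti-diagonal ($i+j=$const) line of the Newton polygon.
   Context: Markov polynomials. Let $x,y,z$ be indeterminates. Consider the set consisting of all rationals $\rho\in[0,1]$, each written in lowest terms $\rho=a/b$ with integers $a\ge 0$, $b\ge 1$, together with the formal symbol $1/0$. Define Laurent polynomials $M_\rho(x,y,z)$ recursively by $M_{1/0}=y$, $M_{0/1}=x$, $M_{1/1}=\frac{x^2+y^2}{z}$, and: whenever $a/b$, $c/d$ are in this set with $|ad-bc|=1$ and $(a+2c)/(b+2d)\in[0,1]$, then $M_{\frac{a+2c}{b+2d}}=\big(M_{c/d}^2+M_{\frac{a+c}{b+d}}^2\big)/M_{a/b}$. This determines $M_\rho$ for every rational $\rho\in[0,1]$. Numerator. For coprime $1\le a\le b$, $P_{a/b}(u,v,w)$ denotes the homogeneous polynomial of degree $a+b-1$ such that $M_{a/b}(x,y,z)=P_{a/b}(x^2,y^2,z^2)/(x^{a-1}y^{b-1}z^{a+b-1})$; its existence is known. *)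

(* Defs.v *)
From HB Require Import structures.
From mathcomp Require Import all_boot all_order all_algebra.
From mathcomp Require Import fraction.
From mathcomp Require Import mpoly.
Set Implicit Arguments. Unset Strict Implicit. Unset Printing Implicit Defensive.
Import Order.TTheory GRing.Theory Num.Theory.
Local Open Scope ring_scope.

(* Polynomial ring Z[x,y,z] (variables 'X_0 = x, 'X_1 = y, 'X_2 = z) and its
   field of fractions, in which the Laurent polynomials M_rho live. *)
Definition Pol := {mpoly int[3]}.
Definition Frac := {fraction Pol}.

Definition frac_of (p : Pol) : Frac := @FracField.tofrac Pol p.

Definition var (i : nat) : Frac := frac_of ('X_(inord i) : Pol).
Definition xv : Frac := var 0.
Definition yv : Frac := var 1.
Definition zv : Frac := var 2.

(* The index set: pairs (a,b) of naturals representing a/b in lowest terms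
   with a/b in [0,1] (b >= 1), or the formal symbol 1/0. *)
Definition in_dom (a b : nat) : bool := coprime a b && ((a <= b)%N || (b == 0)%N).

(* M : nat -> nat -> Frac, M a b standing for M_{a/b}, satisfies the defining
   relations of the Markov polynomials. *)
Definition markov_family (M : nat -> nat -> Frac) : Prop :=
  [/\ M 1%N 0%N = yv, M 0%N 1%N = xv, M 1%N 1%N = (xv ^+ 2 + yv ^+ 2) / zv &
   forall a b c d : nat,
     in_dom a b -> in_dom c d ->
     ((a * d == b * c + 1) || (b * c == a * d + 1))%N ->
     (a + 2 * c <= b + 2 * d)%N ->
     M (a + 2 * c)%N (b + 2 * d)%N
       = (M c d ^+ 2 + M (a + c)%N (b + d)%N ^+ 2) / M a b].

Definition sq_subst (P : Pol) : Pol :=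
  P \mPo [tuple ('X_i : Pol) ^+ 2 | i < 3].

Definition is_numerator (M : nat -> nat -> Frac) (a b : nat) (P : Pol) : Prop :=
  P \is (a + b - 1)%N.-homog /\
  M a b = frac_of (sq_subst P)
          / (xv ^+ (a - 1)%N * yv ^+ (b - 1)%N * zv ^+ (a + b - 1)%N).

Definition coefA (P : Pol) (n : nat) (i j : int) : int :=
  if (0 <= i) && (0 <= j) && (i + j <= n%:Z) then
    P@_[multinom [tuple `|i|%N; `|j|%N; (n - `|i| - `|j|)%N]]
  else 0.

(* Main.v *)
Require Import Defs.
From HB Require Import structures.
From mathcomp Require Import all_boot all_order all_algebra zify ring.
From mathcomp Require Import fraction.
From mathcomp Require Import mpoly.
Set Implicit Arguments. Unset Strict Implicit.
Import Order.TTheory GRing.Theory Num.Theory.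
Local Open Scope ring_scope.
Definition i0 : 'I_3 := inord 0.
Definition i1 : 'I_3 := inord 1.
Definition i2 : 'I_3 := inord 2.

Lemma mdeg3 (m : 'X_{1..3}) : mdeg m = (m i0 + m i1 + m i2)%N.
Proof.
rewrite mdegE !big_ord_recl big_ord0 addn0 addnA.
congr (_ + _ + _); congr (m _); apply/val_inj; rewrite /= inordK //.
Qed.

Lemma v0 : val i0 = 0%N. Proof. by rewrite /= inordK. Qed.
Lemma v1 : val i1 = 1%N. Proof. by rewrite /= inordK. Qed.
Lemma v2 : val i2 = 2%N. Proof. by rewrite /= inordK. Qed.
Lemma mt3 (a b c : nat) :
  let m : 'X_{1..3} := [multinom [tuple a; b; c]] in
  [/\ m i0 = a, m i1 = b & m i2 = c].
Proof. by rewrite /= !mnm_tnth !(tnth_nth 0%N) v0 v1 v2. Qed.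
Local Open Scope nat_scope.
Definition gq (i j l : nat) : nat := 'C(i+j, j) * 'C((i+l).-1, l).
Definition ge (i j l : nat) : nat := if i == 0 then 0 else 'C((i+j).-1, j) * 'C((i+l).-1, l).
Definition cQ n a b c : nat := if a + b + c == n then gq a b c else 0.
Definition cE n a b c : nat := if a + b + c == n then ge a b c else 0.

Lemma stepE n a b c : cE n.+1 a b c =
  (if 0 < c then cE n a b (c-1) else 0) + (if 0 < a then cQ n (a-1) b c else 0).
Proof.
rewrite /cE /cQ /ge /gq.
case: a => [|a] /=; first by case: c => [|c] /=; rewrite ?if_same.
case: c => [|c] /=; rewrite !subn1 /=.
  rewrite add0n; have ->: (a.+1 + b + 0 == n.+1) = (a + b + 0 == n) by lia.
  by rewrite !bin0.
have ->: (a.+1 + b + c.+1 == n.+1) = (a + b + c.+1 == n) by lia.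
have ->: (a.+1 + b + c == n) = (a + b + c.+1 == n) by lia.
case: ifP => // _.
have ->: (a + c.+1).-1 = (a + c) by lia.
by rewrite addnS binS mulnDr addnC.
Qed.

Lemma stepQ n a b c : cQ n.+1 a b c =
  (if 0 < b then cQ n a (b-1) c else 0) + cE n.+1 a b c.
Proof.
rewrite /cE /cQ /ge /gq.
case: a => [|a] /=.
  rewrite if_same addn0 !add0n.
  case: b => [|b] /=.
    rewrite add0n; case: c => [|c] //=.
    by rewrite (bin_small (ltnSn c)) muln0 if_same.
  rewrite subn1 /=. have ->: (b.+1 + c == n.+1) = (b + c == n) by lia.
  by rewrite !binn.
case: b => [|b] /=.
  rewrite !bin0; case: ifP => _ //; ring.
rewrite subn1 /=.
have ->: (a.+1 + b + c == n) = (a.+1 + b.+1 + c == n.+1) by lia.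
case: ifP => // _.
have ->: (a.+1 + b.+1) = (a + b.+1).+1 by lia.
have ->: (a.+1 + b) = (a + b).+1 by lia.
rewrite binS -addnS /= mulnDl; ring.
Qed.
Lemma le_of_eq_mul (X Y a b : nat) : X * a = Y * b -> b <= a -> 0 < a -> X <= Y.
Proof.
move=> E ba a0. rewrite -(leq_pmul2r a0) E. exact: leq_mul.
Qed.

Lemma BL1 m k : 'C(m,k) * 'C(m,k.+2) <= 'C(m,k.+1) ^ 2.
Proof.
have h1 := mul_bin_left m k. have h2 := mul_bin_left m k.+1.
case: (ltnP m k.+2) => hm.
  by rewrite (bin_small hm) muln0.
apply: (@le_of_eq_mul _ _ ((k.+2)*(m-k)) ((k.+1)*(m-k.+1))).
- have ->: 'C(m, k) * 'C(m, k.+2) * (k.+2 * (m - k)) = (k.+2 * 'C(m, k.+2)) * ((m-k) * 'C(m,k)) by ring.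
  rewrite h2 -h1. ring.
- apply: leq_mul => //; lia.
- rewrite muln_gt0; apply/andP; split => //; lia.
Qed.

Lemma BL2 a k : 'C(a+k,k) * 'C((a+k).+2,k.+2) <= 'C((a+k).+1,k.+1) ^ 2.
Proof.
have h1 := mul_bin_diag (a+k).+1 k. have h2 := mul_bin_diag (a+k).+2 k.+1.
rewrite /= in h1 h2.
apply: (@le_of_eq_mul _ _ ((a+k).+1 * k.+2) (k.+1 * (a+k).+2)).
- have ->: 'C(a+k, k) * 'C((a+k).+2, k.+2) * ((a+k).+1 * k.+2) = ((a+k).+1 * 'C(a+k, k)) * (k.+2 * 'C((a+k).+2, k.+2)) by ring.
  rewrite h1 -h2. ring.
- lia.
- lia.
Qed.

Lemma binsym a k : 'C(a+k, a) = 'C(a+k, k).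
Proof. by rewrite -{2}(addnK k a) bin_sub // leq_addl. Qed.

Lemma BL2' a k : 'C(a+k,a) * 'C((a+k).+2,a) <= 'C((a+k).+1,a) ^ 2.
Proof.
rewrite binsym -!addnS !binsym !addnS. exact: BL2.
Qed.

Lemma prod_le (X1 X2 Y Z1 Z2 W : nat) : X1 * X2 <= Y ^ 2 -> Z1 * Z2 <= W ^ 2 ->
  (X1 * Z1) * (X2 * Z2) <= (Y * W) ^ 2.
Proof.
move=> h1 h2. have ->: X1 * Z1 * (X2 * Z2) = (X1 * X2) * (Z1 * Z2) by ring.
rewrite expnMn. exact: leq_mul.
Qed.


Lemma core_H I J L : gq I J L.+2 * gq I.+2 J L <= gq I.+1 J L.+1 ^ 2.
Proof.
rewrite /gq.
have ->: (I + L.+2).-1 = (I+L).+1 by lia.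
have ->: (I.+2 + L).-1 = (I+L).+1 by lia.
have ->: (I.+1 + L.+1).-1 = (I+L).+1 by lia.
have ->: I.+2 + J = (J + I).+2 by lia.
have ->: I.+1 + J = (J + I).+1 by lia.
rewrite (addnC I J).
apply: prod_le; first exact: BL2'.
rewrite mulnC; exact: BL1.
Qed.

Lemma core_V I J L : gq I J L.+2 * gq I J.+2 L <= gq I J.+1 L.+1 ^ 2.
Proof.
rewrite /gq.
have ->: I + J.+2 = (I+J).+2 by lia.
have ->: I + J.+1 = (I+J).+1 by lia.
apply: prod_le; first exact: BL2.
case: I => [|I].
  rewrite add0n /= bin_small //. 
have ->: (I.+1 + L.+2).-1 = (I+L).+2 by lia.
have ->: (I.+1 + L.+1).-1 = (I+L).+1 by lia.
have ->: (I.+1 + L).-1 = (I+L) by lia.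
rewrite mulnC; exact: BL2.
Qed.

Lemma core_D I J L : gq I J.+2 L * gq I.+2 J L <= gq I.+1 J.+1 L ^ 2.
Proof.
rewrite /gq.
have ->: I + J.+2 = (I+J).+2 by lia.
have ->: I.+2 + J = (I+J).+2 by lia.
have ->: I.+1 + J.+1 = (I+J).+2 by lia.
apply: prod_le; first by rewrite mulnC; exact: BL1.
case: I => [|I].
  case: L => [|L]; first by rewrite !bin0.
  by rewrite add0n /= bin_small.
have ->: (I.+1 + L).-1 = L + I by lia.
have ->: (I.+2 + L).-1 = (L+I).+1 by lia.
have ->: (I.+1.+2 + L).-1 = (L+I).+2 by lia.
exact: BL2'.
Qed.

Local Open Scope ring_scope.
Lemma coefXM (p : Pol) (k : 'I_3) (m : 'X_{1..3}) :
  (('X_k : Pol) * p)@_m = if (0 < m k)%N then p@_(m - U_(k))%MM else 0.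
Proof.
rewrite -commr_mpolyX.
case: ifP => hk.
  have hle : (U_(k) <= m)%MM.
    apply/mnm_lepP => i; rewrite mnm1E; by case: eqP => // <-.
  by rewrite -{1}(submK hle) addmC mcoeffMX.
apply: memN_msupp_eq0; rewrite (perm_mem (msuppMX _ _)).
apply/mapP => -[m' _ em]; move: hk; rewrite em mnmDE mnm1E eqxx. by [].
Qed.

Definition u : Pol := 'X_i0.
Definition v : Pol := 'X_i1.
Definition w : Pol := 'X_i2.

Fixpoint QE (n : nat) : Pol * Pol :=
  if n is n'.+1 then
    let qe := QE n' in let e := w * qe.2 + u * qe.1 in (v * qe.1 + e, e)
  else (1, 0).
Definition Q n := (QE n).1.
Definition E n := (QE n).2.

Lemma QES n : E n.+1 = w * E n + u * Q n /\ Q n.+1 = v * Q n + E n.+1.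
Proof. by []. Qed.

Lemma compB (k : 'I_3) (m : 'X_{1..3}) i : (m - U_(k))%MM i = (m i - (k == i))%N.
Proof. by rewrite mnmBE mnm1E. Qed.

Lemma ifZ (b : bool) (x : nat) : (if b then x%:Z else 0) = (if b then x else 0%N)%:Z.
Proof. by case: b. Qed.

Lemma e01 : (i0 == i1) = false. Proof. by rewrite -val_eqE v0 v1. Qed.
Lemma e02 : (i0 == i2) = false. Proof. by rewrite -val_eqE v0 v2. Qed.
Lemma e12 : (i1 == i2) = false. Proof. by rewrite -val_eqE v1 v2. Qed.
Lemma e10 : (i1 == i0) = false. Proof. by rewrite -val_eqE v0 v1. Qed.
Lemma e20 : (i2 == i0) = false. Proof. by rewrite -val_eqE v0 v2. Qed.
Lemma e21 : (i2 == i1) = false. Proof. by rewrite -val_eqE v1 v2. Qed.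

Lemma coefQE n (m : 'X_{1..3}) :
  (Q n)@_m = (cQ n (m i0) (m i1) (m i2))%:Z /\ (E n)@_m = (cE n (m i0) (m i1) (m i2))%:Z.
Proof.
elim: n m => [|n IH] m.
  rewrite /Q /E /= mcoeff1 mcoeff0 -mdeg_eq0 mdeg3 /cQ /cE /ge /gq.
  case: eqP => h; last by [].
  have [-> -> ->] : [/\ m i0 = 0%N, m i1 = 0%N & m i2 = 0%N] by split; lia.
  by [].
have hE : (E n.+1)@_m = (cE n.+1 (m i0) (m i1) (m i2))%:Z.
  rewrite (proj1 (QES n)) mcoeffD /w /u !coefXM.
  rewrite (proj2 (IH _)) (proj1 (IH _)) !compB !eqxx e20 e21 e01 e02 !subn0.
  by rewrite !ifZ -PoszD stepE.
split => //.
rewrite (proj2 (QES n)) mcoeffD /v coefXM hE (proj1 (IH _)) !compB eqxx e10 e12 !subn0.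
by rewrite !ifZ -PoszD stepQ.
Qed.

Lemma aux_rec (R : comRingType) (u v w q e : R) :
  v * (v * q + e) + (w * e + u * (v * q + e)) = (u + v + w) * (v * q + e) - v * w * q.
Proof. ring. Qed.

Lemma Qrec n : Q n.+2 = (u + v + w) * Q n.+1 - v * w * Q n.
Proof.
rewrite (proj2 (QES n.+1)) (proj1 (QES n.+1)) (proj2 (QES n)). exact: aux_rec.
Qed.

Lemma Q0 : Q 0 = 1. Proof. by []. Qed.
Lemma Q1 : Q 1 = u + v.
Proof. by rewrite /Q /= mulr1 mulr0 add0r mulr1 addrC. Qed.

Lemma aux_cas0 (R : comRingType) (u v w : R) :
  ((u + v + w) * (u + v) - v * w * 1) * 1 = (u + v) ^+ 2 + u * w * 1.
Proof. ring. Qed.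

Lemma aux_cas (R : comRingType) (u v w q1 q0 P : R) :
  ((u+v+w) * ((u+v+w)*q1 - v*w*q0) - v*w*q1) * q1 - (((u+v+w)*q1 - v*w*q0)^+2 + u*w*((v*w)*P))
  = v*w*(((u+v+w)*q1 - v*w*q0)*q0 - (q1^+2 + u*w*P)).
Proof. ring. Qed.

Lemma cassini n : Q n.+2 * Q n = Q n.+1 ^+ 2 + u * w * (v * w) ^+ n.
Proof.
elim: n => [|n IH].
  by rewrite Qrec Q1 Q0 expr0; exact: aux_cas0.
have e : Q n.+3 * Q n.+1 - (Q n.+2 ^+ 2 + u * w * (v * w) ^+ n.+1)
   = v * w * (Q n.+2 * Q n - (Q n.+1 ^+ 2 + u * w * (v * w) ^+ n)).
  rewrite (Qrec n.+1) (Qrec n) [(v * w) ^+ n.+1]exprS. exact: aux_cas.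
by apply/eqP; rewrite -subr_eq0 e IH subrr mulr0.
Qed.

Definition F (p : Pol) : Frac := frac_of (sq_subst p).

Lemma FD p q : F (p + q) = F p + F q.
Proof. by rewrite /F /sq_subst rmorphD /frac_of tofracD. Qed.
Lemma FM p q : F (p * q) = F p * F q.
Proof. by rewrite /F /sq_subst rmorphM /frac_of tofracM. Qed.
Lemma FX p k : F (p ^+ k) = F p ^+ k.
Proof. by rewrite /F /sq_subst rmorphXn /frac_of tofracXn. Qed.
Lemma Fvar (i : 'I_3) : F 'X_i = frac_of 'X_i ^+ 2.
Proof.
rewrite /F /sq_subst comp_mpolyXU -tnth_nth tnth_map tnth_ord_tuple.
by rewrite /frac_of tofracXn.
Qed.
Lemma Fu : F u = xv ^+ 2. Proof. exact: Fvar. Qed.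
Lemma Fv : F v = yv ^+ 2. Proof. exact: Fvar. Qed.
Lemma Fw : F w = zv ^+ 2. Proof. exact: Fvar. Qed.

Lemma sq_prod (m : 'X_{1..3}) :
  \prod_(i < 3) (tnth [tuple ('X_i : Pol) ^+ 2 | i < 3] i) ^+ (m i) = 'X_[(m *+ 2)%MM].
Proof.
rewrite [RHS]mpolyXE_id; apply: eq_bigr => i _.
by rewrite tnth_map tnth_ord_tuple mulmnE -exprM mulnC.
Qed.

Lemma coef_sq (p : Pol) (m : 'X_{1..3}) : (sq_subst p)@_(m *+ 2)%MM = p@_m.
Proof.
rewrite /sq_subst comp_mpolyE raddf_sum /=.
rewrite [in RHS](mpolyE p) raddf_sum /=.
apply: eq_bigr => m' _; rewrite !mcoeffZ sq_prod !mcoeffX.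
have -> : ((m' *+ 2)%MM == (m *+ 2)%MM) = (m' == m); last done.
apply/eqP/eqP => [h|->//]; apply/mnmP => i; move/mnmP/(_ i): h; rewrite !mulmnE => h. lia.
Qed.

Lemma sq_subst_neq0 (p : Pol) : p != 0 -> F p != 0.
Proof.
move=> hp; rewrite /F /frac_of tofrac_eq0; apply: contra hp => /eqP h.
apply/eqP/mpolyP => m; by rewrite -coef_sq h !mcoeff0.
Qed.

Lemma var_neq0 (i : 'I_3) : frac_of ('X_i : Pol) != 0.
Proof.
rewrite /frac_of tofrac_eq0; apply/negP => /eqP h.
by move: (@mcoeffXU 3 int i i); rewrite h mcoeff0 eqxx.
Qed.

Lemma Q_neq0 n : Q n != 0.
Proof.
apply/negP => /eqP h.
have := proj1 (coefQE n [multinom [tuple 0%N; n; 0%N]]).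
rewrite h mcoeff0; case: (mt3 0 n 0) => -> -> ->.
by rewrite /cQ add0n addn0 eqxx /gq binn.
Qed.

Lemma FB p q : F (p - q) = F p - F q.
Proof. by rewrite /F /sq_subst rmorphB /frac_of tofracB. Qed.
Lemma F1 : F 1 = 1.
Proof. by rewrite /F /sq_subst rmorph1 /frac_of tofrac1. Qed.

Lemma xv0 : xv != 0. Proof. exact: var_neq0. Qed.
Lemma yv0 : yv != 0. Proof. exact: var_neq0. Qed.
Lemma zv0 : zv != 0. Proof. exact: var_neq0. Qed.

Lemma Mrec1 M : markov_family M -> forall n, M 1%N n.+2 = (xv ^+ 2 + M 1%N n.+1 ^+ 2) / M 1%N n.
Proof.
case=> _ M01 _ Mrec n.
have := Mrec 1%N n 0%N 1%N.
have e1 : (1 + 2 * 0 = 1)%N by []. have e2 : (n + 2 * 1 = n.+2)%N by lia.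
have e3 : (1 + 0 = 1)%N by []. have e4 : (n + 1 = n.+1)%N by lia.
rewrite e1 e2 ?e3 e4 M01; apply.
- rewrite /in_dom coprime1n; clear e1 e2 e3 e4; by case: n.
- by [].
- by rewrite muln0 mul1n eqxx.
- lia.
Qed.

Lemma fbase2 (K : fieldType) (x y z : K) : y != 0 -> z != 0 ->
  (x ^+ 2 + ((x ^+ 2 + y ^+ 2) / z) ^+ 2) / y
  = ((x ^+ 2 + y ^+ 2 + z ^+ 2) * (x ^+ 2 + y ^+ 2) - y ^+ 2 * z ^+ 2 * 1) / (y ^+ 1 * z ^+ 2).
Proof. move=> hy hz. field. by rewrite hy hz. Qed.

Lemma fstep (K : fieldType) (x y z A B C Y Z : K) : y != 0 -> z != 0 -> A != 0 -> Y != 0 -> Z != 0 ->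
  C * A = B ^+ 2 + x ^+ 2 * z ^+ 2 * ((y ^+ 2 * z ^+ 2) * (Y ^+ 2 * Z ^+ 2)) ->
  (x ^+ 2 + (B / ((y * Y) * (z * (z * Z)))) ^+ 2) / (A / (Y * (z * Z)))
  = C / ((y * (y * Y)) * (z * (z * (z * Z)))).
Proof.
move=> hy hz hA hY hZ hC.
have -> : C = (B ^+ 2 + x ^+ 2 * z ^+ 2 * ((y ^+ 2 * z ^+ 2) * (Y ^+ 2 * Z ^+ 2))) / A.
  by rewrite -hC mulfK.
field. by rewrite hy hz hA hY hZ.
Qed.

Lemma FQ1 : F (Q 1) = xv ^+ 2 + yv ^+ 2.
Proof. by rewrite Q1 FD Fu Fv. Qed.

Lemma Mform M : markov_family M ->
  forall k, M 1%N k.+1 = F (Q k.+1) / (yv ^+ k * zv ^+ k.+1).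
Proof.
move=> hM.
have [M10 _ M11 _] := hM.
suff H : forall k, M 1%N k.+1 = F (Q k.+1) / (yv ^+ k * zv ^+ k.+1) /\
                   M 1%N k.+2 = F (Q k.+2) / (yv ^+ k.+1 * zv ^+ k.+2).
  by move=> k; case: (H k).
elim=> [|k [IH1 IH2]].
  have h1 : M 1%N 1%N = F (Q 1) / (yv ^+ 0 * zv ^+ 1) by rewrite M11 FQ1 expr0 mul1r expr1.
  split => //.
  rewrite Mrec1 // M10 M11 (Qrec 0) Q1 Q0 FB !FM !FD F1 Fu Fv Fw.
  apply: fbase2; [exact: yv0 | exact: zv0].
split => //.
rewrite Mrec1 // IH1 IH2.
have hc := cassini k.+1.
move: (congr1 F hc); rewrite FD !FX !FM (FX (v * w)) FM Fu Fv Fw => hC.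
rewrite [yv ^+ k.+1]exprS [yv ^+ k.+2]exprS [yv ^+ k.+1]exprS.
rewrite [zv ^+ k.+1]exprS [zv ^+ k.+2]exprS [zv ^+ k.+1]exprS [zv ^+ k.+3]exprS [zv ^+ k.+2]exprS [zv ^+ k.+1]exprS.
apply: fstep.
- exact: yv0.
- exact: zv0.
- exact: sq_subst_neq0 (Q_neq0 _).
- exact: expf_neq0 yv0.
- exact: expf_neq0 zv0.
- rewrite hC; congr (_ + _); congr (_ * _).
  by rewrite exprS exprMn -!exprM mulnC !exprM.
Qed.

Lemma sqZ (a b c : nat) : (a * b <= c ^ 2)%N -> a%:Z * b%:Z <= c%:Z ^+ 2.
Proof. by move=> h; rewrite expr2 -!PoszM lez_nat mulnn. Qed.

Definition dom (n : nat) (i j : int) : bool := (0 <= i) && (0 <= j) && (i + j <= n%:Z).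
Definition hA n (i j : int) : nat :=
  if dom n i j then gq (absz i) (absz j) (n - absz i - absz j)%N else 0%N.

Lemma lcH n i j : (hA n (i - 1) j * hA n (i + 1) j <= hA n i j ^ 2)%N.
Proof.
rewrite /hA /dom. case: ifP => d1; last by rewrite mul0n. case: ifP => d2; last by rewrite muln0.
move: d1 d2 => /andP[/andP[h1 h2] h3] /andP[/andP[h4 h5] h6].
rewrite ifT; last by (apply/andP; split; [apply/andP; split|]; lia).
have -> : (n - absz (i - 1)%R - absz j = (n - absz (i + 1)%R - absz j).+2)%N by lia.
have -> : (n - absz i - absz j = (n - absz (i + 1)%R - absz j).+1)%N by lia.
move: (n - absz (i + 1)%R - absz j)%N => L.
have -> : absz i = (absz (i - 1)%R).+1 by lia.
have -> : absz (i + 1)%R = (absz (i - 1)%R).+2 by lia.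
exact: core_H.
Qed.

Lemma lcV n i j : (hA n i (j - 1) * hA n i (j + 1) <= hA n i j ^ 2)%N.
Proof.
rewrite /hA /dom. case: ifP => d1; last by rewrite mul0n. case: ifP => d2; last by rewrite muln0.
move: d1 d2 => /andP[/andP[h1 h2] h3] /andP[/andP[h4 h5] h6].
rewrite ifT; last by (apply/andP; split; [apply/andP; split|]; lia).
have -> : (n - absz i - absz (j - 1)%R = (n - absz i - absz (j + 1)%R).+2)%N by lia.
have -> : (n - absz i - absz j = (n - absz i - absz (j + 1)%R).+1)%N by lia.
move: (n - absz i - absz (j + 1)%R)%N => L.
have -> : absz j = (absz (j - 1)%R).+1 by lia.
have -> : absz (j + 1)%R = (absz (j - 1)%R).+2 by lia.
exact: core_V.
Qed.

Lemma lcD n i j : (hA n (i - 1) (j + 1) * hA n (i + 1) (j - 1) <= hA n i j ^ 2)%N.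
Proof.
rewrite /hA /dom. case: ifP => d1; last by rewrite mul0n. case: ifP => d2; last by rewrite muln0.
move: d1 d2 => /andP[/andP[h1 h2] h3] /andP[/andP[h4 h5] h6].
rewrite ifT; last by (apply/andP; split; [apply/andP; split|]; lia).
have -> : (n - absz (i - 1)%R - absz (j + 1)%R = n - absz i - absz j)%N by lia.
have -> : (n - absz (i + 1)%R - absz (j - 1)%R = n - absz i - absz j)%N by lia.
move: (n - absz i - absz j)%N => L.
have -> : absz i = (absz (i - 1)%R).+1 by lia.
have -> : absz (i + 1)%R = (absz (i - 1)%R).+2 by lia.
have -> : absz j = (absz (j - 1)%R).+1 by lia.
have -> : absz (j + 1)%R = (absz (j - 1)%R).+2 by lia.
exact: core_D.
Qed.

Lemma coefA_eq (P : Pol) n i j : (forall m, P@_m = (Q n)@_m) ->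
  coefA P n i j = (hA n i j)%:Z.
Proof.
move=> hP; rewrite /coefA /hA /dom; case: ifP => // /andP[/andP[h1 h2] h3].
rewrite hP (proj1 (coefQE _ _)); case: (mt3 (absz i) (absz j) (n - absz i - absz j)) => -> -> ->.
by rewrite /cQ ifT //; apply/eqP; lia.
Qed.

Unset Implicit Arguments.
Theorem theorem6p4 (M : nat -> nat -> Frac) (n : nat) (P : Pol) :
  markov_family M -> (1 <= n)%N -> is_numerator M 1 n P ->
  forall i j : int,
    [/\ coefA P n (i - 1) j * coefA P n (i + 1) j <= coefA P n i j ^+ 2,
        coefA P n i (j - 1) * coefA P n i (j + 1) <= coefA P n i j ^+ 2 &
        coefA P n (i - 1) (j + 1) * coefA P n (i + 1) (j - 1) <= coefA P n i j ^+ 2].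
Proof.
move=> hM hn [_ hP] i j.
have coefP : forall m, P@_m = (Q n)@_m.
  case: n hn hP => [//|k] _ hP m.
  have e1 : (1 - 1 = 0)%N by []. have e2 : (k.+1 - 1 = k)%N by lia.
  have e3 : (1 + k.+1 - 1 = k.+1)%N by lia.
  rewrite e1 e2 e3 expr0 mul1r Mform // in hP.
  have hD : yv ^+ k * zv ^+ k.+1 != 0.
    by apply: mulf_neq0; apply: expf_neq0; [exact: yv0 | exact: zv0].
  have hF : F (Q k.+1) = frac_of (sq_subst P).
    move/(congr1 (fun t => t * (yv ^+ k * zv ^+ k.+1))): hP.
    rewrite /= !divfK //.
  have hS : sq_subst P = sq_subst (Q k.+1).
    move: hF; rewrite /F /frac_of => /esym/eqP. rewrite tofrac_eq => /eqP. exact.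
  by rewrite -[LHS]coef_sq -[RHS]coef_sq hS.
rewrite !(coefA_eq _ _ coefP).
split; apply: sqZ; [exact: lcH | exact: lcV | exact: lcD].
Qed.
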